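(* Let $m\geq 3$ be an integer. Let $H$ be the graph obtained from $C_m[4]$ by adding, for each vertex $x$ of $C_m$, all six edges among the four vertices $(x,0),(x,1),(x,2),(x,3)$ (so that these four vertices induce a $K_4$). Then there exists a perfect matching $I$ of $C_m[4]$ such that the edge set of $H-I$ can be partitioned into two $C_4$-factors and three $C_m$-factors.
   Context: For a graph $G$ and a positive integer $k$, $G[k]$ is the graph with vertex set $V(G)\times\{0,1,\dots,k-1\}$ in which $(u,i)$ and $(w,j)$ are adjacent if and only if $uw\in E(G)$. $C_m$ is the cycle of length $m$. A perfect matching (1-factor) is a set of pairwise disjoint edges covering all vertices. A $C_k$-factor of a graph is a spanning subgraph each of whose components is a cycle of length $k$. $H-I$ denotes $H$ with the edges of $I$ removed. *)

(* Defs.v *)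
From mathcomp Require Import all_boot.
Set Implicit Arguments. Unset Strict Implicit. Unset Printing Implicit Defensive.

Definition V (m : nat) : finType := ('I_m * 'I_4)%type.

Definition cadj (m : nat) (x y : 'I_m) : bool :=
  (nat_of_ord y == (x.+1 %% m)) || (nat_of_ord x == (y.+1 %% m)).

Definition blowE (m : nat) : {set {set V m}} :=
  [set e | [exists x : V m, exists y : V m,
     [&& e == [set x; y], x != y & cadj x.1 y.1]]].

Definition HE (m : nat) : {set {set V m}} :=
  [set e | [exists x : V m, exists y : V m,
     [&& e == [set x; y], x != y & cadj x.1 y.1 || (x.1 == y.1)]]].

Definition perfect_matching (T : finType) (E I : {set {set T}}) : Prop :=
  I \subset E /\ forall v : T, #|[set e in I | v \in e]| = 1.

Definition cycle_edges (T : finType) (c : seq T) : {set {set T}} :=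
  [set [set x; next c x] | x in c].

Definition Ck_factor (T : finType) (k : nat) (E F : {set {set T}}) : Prop :=
  F \subset E /\
  exists cs : seq (seq T),
    [/\ all (fun c => size c == k) cs,
        uniq (flatten cs),
        (forall v : T, v \in flatten cs) &
        F = \bigcup_(c <- cs) cycle_edges c].

(* Main.v *)
Require Import Defs.
From mathcomp Require Import all_boot zify.
Set Implicit Arguments. Unset Strict Implicit. Unset Printing Implicit Defensive.


Lemma in_bigcup_seq (T : finType) (S : eqType) (X : S -> {set T}) (cs : seq S) e :
  (e \in \bigcup_(c <- cs) X c) = has (fun c => e \in X c) cs.
Proof.
elim: cs => [|c cs IH]; first by rewrite big_nil inE.
by rewrite big_cons inE IH.
Qed.

Lemma fcycle_traj (T : eqType) (s : T -> T) x k :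
  0 < k -> iter k s x = x -> fcycle s (traject s x k).
Proof.
case: k => // k _ hk; rewrite trajectS /=.
have -> : rcons (traject s (s x) k) x = traject s (s x) k.+1.
  by rewrite trajectSr -iterSr hk.
exact: fpath_traject.
Qed.

Lemma size_flat_traj (T : eqType) (s : T -> T) (rs : seq T) k :
  size (flatten [seq traject s x k | x <- rs]) = size rs * k.
Proof. by elim: rs => //= x rs IH; rewrite size_cat size_traject IH mulSn. Qed.

Lemma factor_traj (T : finType) (k : nat) (E : {set {set T}}) (s : T -> T) (rs : seq T) :
  0 < k -> (forall x, x \in rs -> iter k s x = x) ->
  size rs * k = #|T| ->
  (forall v, exists2 x, x \in rs & exists2 t, t < k & v = iter t s x) ->
  (forall v, [set v; s v] \in E) ->
  Ck_factor k E [set [set v; s v] | v : T].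
Proof.
move=> k0 hk hsz hcov hE; split.
  by apply/subsetP => e /imsetP [v _ ->]; exact: hE.
exists [seq traject s x k | x <- rs].
have cov : forall v, v \in flatten [seq traject s x k | x <- rs].
  move=> v; case: (hcov v) => x xr [t tk ->]; apply/flatten_mapP; exists x => //.
  by apply/trajectP; exists t.
split.
- by apply/allP => c /mapP [x _ ->]; rewrite size_traject.
- rewrite (uniq_size_uniq (enum_uniq T)); last by move=> v; rewrite mem_enum cov.
  by rewrite size_flat_traj hsz cardE.
- exact: cov.
apply/setP => e; rewrite in_bigcup_seq; apply/imsetP/hasP.
  case=> v _ ->; have /flatten_mapP [x xr vx] := cov v.
  exists (traject s x k); first by apply/mapP; exists x.
  rewrite /cycle_edges; apply/imsetP; exists v => //.
  by rewrite (nextE (fcycle_traj k0 (hk x xr)) vx).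
case=> c /mapP [x xr ->] /imsetP [v vx ->]; exists v => //.
by rewrite (nextE (fcycle_traj k0 (hk x xr)) vx).
Qed.

Lemma set2_inv (T : finType) (a b c d : T) :
  [set a; b] = [set c; d] -> (a = c /\ b = d) \/ (a = d /\ b = c).
Proof.
move=> E.
have ha : a \in [set c; d] by rewrite -E set21.
have hb : b \in [set c; d] by rewrite -E set22.
have hc : c \in [set a; b] by rewrite E set21.
have hd : d \in [set a; b] by rewrite E set22.
case/set2P: ha => ?; case/set2P: hb => ?; subst; auto.
- by case/set2P: hd => ?; subst; auto.
- by case/set2P: hc => ?; subst; auto.
Qed.


Definition i0 : 'I_4 := @Ordinal 4 0 isT.
Definition i1 : 'I_4 := @Ordinal 4 1 isT.
Definition i2 : 'I_4 := @Ordinal 4 2 isT.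
Definition i3 : 'I_4 := @Ordinal 4 3 isT.

Lemma I4cases (i : 'I_4) : [\/ i = i0, i = i1, i = i2 | i = i3].
Proof.
case: i => [[|[|[|[|k]]]] H]; try (by constructor; apply/val_inj).
Qed.

Definition perm4 (a b c d : 'I_4) (i : 'I_4) : 'I_4 :=
  match val i with 0 => a | 1 => b | 2 => c | _ => d end.

Definition tab (c k : nat) : 'I_4 -> 'I_4 :=
  match c, k with
  | 0, 0 => perm4 i0 i1 i2 i3
  | 0, 1 => perm4 i2 i3 i0 i1
  | 0, _ => perm4 i3 i2 i1 i0
  | 1, 0 => perm4 i0 i1 i2 i3
  | 1, 1 => perm4 i2 i3 i1 i0
  | 1, _ => perm4 i3 i2 i0 i1
  | 2, 0 => perm4 i2 i3 i1 i0
  | 2, 1 => perm4 i3 i2 i0 i1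
  | 2, _ => perm4 i0 i1 i2 i3
  | _, 0 => perm4 i3 i2 i0 i1
  | _, 1 => perm4 i0 i1 i2 i3
  | _, _ => perm4 i2 i3 i1 i0
  end.

Definition rho : 'I_4 -> 'I_4 := perm4 i1 i0 i3 i2.

Lemma tab_cases c : [\/ tab c =1 tab 0, tab c =1 tab 1, tab c =1 tab 2 | tab c =1 tab 3].
Proof. by case: c => [|[|[|c]]]; [constructor 1|constructor 2|constructor 3|constructor 4]. Qed.

Lemma tab_dist c k l i : k < 3 -> l < 3 -> k != l -> tab c k i != tab c l i.
Proof.
case: k => [|[|[|]]] //; case: l => [|[|[|]]] // _ _ _;
case: (I4cases i) => ->; by case: c => [|[|[|c]]].
Qed.

Lemma tab_rho c k i : tab c k i != rho i.
Proof. by case: (I4cases i) => ->; case: c => [|[|[|c]]]; case: k => [|[|k]]. Qed.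

Lemma tab_cover c i j :
  [|| j == rho i, j == tab c 0 i, j == tab c 1 i | j == tab c 2 i].
Proof. by case: (I4cases i) => ->; case: (I4cases j) => ->; case: c => [|[|[|c]]]. Qed.

Lemma tab_inj c k : injective (tab c k).
Proof.
move=> i j; case: (I4cases i) => ->; case: (I4cases j) => ->; 
  by case: c => [|[|[|c]]]; case: k => [|[|k]].
Qed.

Lemma tab_invol k i : tab 0 k (tab 0 k i) = i.
Proof. by case: (I4cases i) => ->; case: k => [|[|k]]. Qed.

Lemma tab_block k i : tab 3 k (tab 2 k (tab 1 k i)) = i.
Proof. by case: (I4cases i) => ->; case: k => [|[|k]]. Qed.


Definition oS n (a : 'I_n.+3) : 'I_n.+3 := ordS a.
Definition oP n (a : 'I_n.+3) : 'I_n.+3 := ord_pred a.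

Lemma valS n (a : 'I_n.+3) : val (oS a) = if a.+1 == n.+3 then 0 else a.+1.
Proof.
rewrite /oS /ordS /=; case: eqP => [->|h]; first by rewrite modnn.
by rewrite modn_small //; have := ltn_ord a; lia.
Qed.

Lemma oSK n : cancel (@oS n) (@oP n). Proof. exact: ordSK. Qed.
Lemma oPK n : cancel (@oP n) (@oS n). Proof. exact: ord_predK. Qed.

Lemma oS_neq n (a : 'I_n.+3) : (oS a == a) = false.
Proof.
apply/negP => /eqP/(congr1 val); rewrite valS.
by case: (boolP (a.+1 == n.+3)) => /eqP h /=; lia.
Qed.

Lemma oSS_neq n (a : 'I_n.+3) : (oS (oS a) == a) = false.
Proof.
apply/negbTE/eqP; move=> /(congr1 val); rewrite valS (valS a).
have := ltn_ord a; case: (boolP (a.+1 == n.+3)) => /eqP h1 /=; last first.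
  case: (boolP (a.+2 == n.+3)) => /eqP h2 /=; lia.
case: (boolP (1 == n.+3)) => /eqP h2 /=; lia.
Qed.

Lemma oS_neq' n (a : 'I_n.+3) : (a == oS a) = false.
Proof. by rewrite eq_sym oS_neq. Qed.

Lemma oP_neq n (a : 'I_n.+3) : (oP a == a) = false.
Proof. by apply/negP => /eqP h; move: (oS_neq (oP a)); rewrite oPK h eqxx. Qed.
Lemma oP_neq' n (a : 'I_n.+3) : (a == oP a) = false.
Proof. by rewrite eq_sym oP_neq. Qed.

Lemma oPS_neq n (a : 'I_n.+3) : (oP a == oS a) = false.
Proof.
by apply/negP => /eqP h; move: (oSS_neq (oP a)); rewrite oPK -h eqxx.
Qed.
Lemma oPS_neq' n (a : 'I_n.+3) : (oS a == oP a) = false.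
Proof. by rewrite eq_sym oPS_neq. Qed.

Lemma oS2 n (a b : 'I_n.+3) : b = oS a -> (a == oS b) = false.
Proof. by move=> ->; rewrite eq_sym oSS_neq. Qed.

Definition coden n (t : nat) : nat := if odd n.+3 && (n <= t) then t - n + 1 else 0.
Definition sig n k (a : 'I_n.+3) : 'I_4 -> 'I_4 := tab (coden n a) k.

Notation T n := (V n.+3).

Definition s1 n (u : T n) : T n := (u.1, ordS u.2).
Definition s2 n (u : T n) : T n :=
  match val u.2 with 0 => (u.1, i2) | 1 => (oP u.1, i0) | 2 => (oS u.1, i3) | _ => (u.1, i1) end.
Definition sk n k (u : T n) : T n := (oS u.1, sig k u.1 u.2).
Definition pm n (u : T n) : T n :=
  match val u.2 with 0 => (oP u.1, i1) | 1 => (oS u.1, i0) | 2 => (oP u.1, i3) | _ => (oS u.1, i2) end.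
Definition sf n (j : nat) : T n -> T n :=
  match j with 1 => @s1 n | 2 => @s2 n | 3 => @sk n 0 | 4 => @sk n 1 | _ => @sk n 2 end.

Definition labx n (a : 'I_n.+3) (i j : 'I_4) : nat :=
  if j == rho i then (if odd i then 0 else 2)
  else if j == sig 0 a i then 3 else if j == sig 1 a i then 4 else 5.

Definition lab n (u v : T n) : nat :=
  if u.1 == v.1 then (if u.2 == v.2 then 7
                      else if (v.2 == ordS u.2) || (u.2 == ordS v.2) then 1 else 2)
  else if v.1 == oS u.1 then labx u.1 u.2 v.2
  else if u.1 == oS v.1 then labx v.1 v.2 u.2 else 7.

Lemma lab_sym n (u v : T n) : lab u v = lab v u.
Proof.
case: u v => [a i] [b j]; rewrite /lab /=.
case: (eqVneq a b) => [e|ab].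
  by subst; rewrite eq_sym orbC.
case: (eqVneq b (oS a)) => [e|_]; last by [].
by rewrite (oS2 e).
Qed.

Lemma labx_le n (a : 'I_n.+3) i j : labx a i j <= 5.
Proof. rewrite /labx; do !case: ifP => //. Qed.

Lemma labx_sig n (a : 'I_n.+3) k i : k < 3 -> labx a i (sig k a i) = k + 3.
Proof.
move=> hk; rewrite /labx /sig (negbTE (tab_rho _ _ _)).
case: k hk => [|[|[|]]] // _; rewrite ?eqxx //.
- by rewrite (negbTE (@tab_dist _ 1 0 _ isT isT isT)).
- by rewrite (negbTE (@tab_dist _ 2 0 _ isT isT isT)) (negbTE (@tab_dist _ 2 1 _ isT isT isT)).
Qed.


Ltac simpo := rewrite /= ?eqxx ?oS_neq ?oS_neq' ?oP_neq ?oP_neq' ?oPS_neq ?oPS_neq' ?oPK ?oSK ?eqxx /=.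

Lemma lab_sf n j (u : T n) : 1 <= j <= 5 -> lab u (sf j u) = j.
Proof.
case: u => a i.
case: j => [|[|[|[|[|[|j]]]]]] // _.
- by case: (I4cases i) => ->; rewrite /lab /sf /s1; simpo.
- by case: (I4cases i) => ->; rewrite /lab /sf /s2; simpo.
- by rewrite /lab /sf /sk; simpo; rewrite labx_sig.
- by rewrite /lab /sf /sk; simpo; rewrite labx_sig.
- by rewrite /lab /sf /sk; simpo; rewrite labx_sig.
Qed.

Lemma lab_pm n (u : T n) : lab u (pm u) = 0.
Proof. by case: u => a i; case: (I4cases i) => ->; rewrite /lab /pm; simpo. Qed.

Ltac pairt := apply/eqP; rewrite ?xpair_eqE; simpo.
Ltac lr := first [by left; rewrite /sf /s1 /s2 /sk /pm; pairt
                 | by right; rewrite /sf /s1 /s2 /sk /pm; pairt].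

Lemma lab0 n (u v : T n) : lab u v = 0 -> v = pm u.
Proof.
case: u v => a i [b j]; rewrite /lab /=.
case: (eqVneq a b) => [e|ab].
  by subst; case: ifP => //; case: ifP.
case: (eqVneq b (oS a)) => [e|nb].
  subst; rewrite /labx; case: (eqVneq j (rho i)) => [->|]; last by do !case: ifP.
  by case: (I4cases i) => -> //= _; pairt.
case: (eqVneq a (oS b)) => [e|] //.
subst; rewrite /labx; case: (eqVneq i (rho j)) => [->|]; last by do !case: ifP.
by case: (I4cases j) => -> //= _; pairt.
Qed.

Lemma sig2 n (a : 'I_n.+3) i j : j != rho i -> j != sig 0 a i -> j != sig 1 a i ->
  j = sig 2 a i.
Proof.
move=> h1 h2 h3; have := tab_cover (coden n a) i j.
by rewrite /sig (negbTE h1) (negbTE h2) (negbTE h3) /= => /eqP.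
Qed.

Lemma labk n (u v : T n) : 1 <= lab u v <= 5 -> v = sf (lab u v) u \/ u = sf (lab u v) v.
Proof.
case: u v => a i [b j]; rewrite /lab /=.
case: (eqVneq a b) => [e|ab].
  subst; case: (I4cases i) => ->; case: (I4cases j) => -> /= H; try discriminate; lr.
case: (eqVneq b (oS a)) => [e|nb].
  subst; rewrite /labx; case: (eqVneq j (rho i)) => [->|n1].
    by case: (I4cases i) => -> /= H; try discriminate; lr.
  case: (eqVneq j (sig 0 a i)) => [->|n2] _; first by left.
  case: (eqVneq j (sig 1 a i)) => [->|n3]; first by left.
  by left; rewrite (sig2 n1 n2 n3).
case: (eqVneq a (oS b)) => [e|] //.
subst; rewrite /labx; case: (eqVneq i (rho j)) => [->|n1].
  by case: (I4cases j) => -> /= H; try discriminate; lr.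
case: (eqVneq i (sig 0 b j)) => [->|n2] _; first by right.
case: (eqVneq i (sig 1 b j)) => [->|n3]; first by right.
by right; rewrite (sig2 n1 n2 n3).
Qed.

Lemma cadjE n (a b : 'I_n.+3) : cadj a b = (b == oS a) || (a == oS b).
Proof. by rewrite /cadj -[b == oS a]val_eqE -[a == oS b]val_eqE. Qed.

Lemma lab_adj n (u v : T n) : lab u v <= 5 -> [set u; v] \in HE n.+3.
Proof.
move=> H; rewrite inE; apply/existsP; exists u; apply/existsP; exists v; rewrite eqxx /=.
move: H; case: u v => a i [b j]; rewrite /lab /= xpair_eqE.
case: (eqVneq a b) => [e|ab] /=.
  by subst; rewrite orbT andbT; case: (eqVneq i j).
rewrite cadjE; case: (eqVneq b (oS a)) => //=; by case: (eqVneq a (oS b)).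
Qed.

Lemma lab0_blow n (u v : T n) : lab u v = 0 -> [set u; v] \in blowE n.+3.
Proof.
move=> H; rewrite inE; apply/existsP; exists u; apply/existsP; exists v; rewrite eqxx /=.
move: H; case: u v => a i [b j]; rewrite /lab /= xpair_eqE.
case: (eqVneq a b) => [e|ab] /=.
  by subst; case: ifP => //; case: ifP.
rewrite cadjE; case: (eqVneq b (oS a)) => //=; by case: (eqVneq a (oS b)).
Qed.

Lemma HE_lab n e : e \in HE n.+3 -> exists u v, e = [set u; v] /\ lab u v <= 5.
Proof.
rewrite inE => /existsP [u /existsP [v /and3P [/eqP -> uv adj]]].
exists u, v; split => //; move: uv adj; case: u v => a i [b j]; rewrite /lab /= xpair_eqE.
case: (eqVneq a b) => [eab|ab] /=.
  by subst; case: (eqVneq i j) => //= _ _ _; case: ifP.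
rewrite orbF cadjE; case: (eqVneq b (oS a)) => /= _ _; first by rewrite labx_le.
by case: (eqVneq a (oS b)) => //= _; rewrite labx_le.
Qed.

Lemma lab_pair n (a b c d : T n) : [set a; b] = [set c; d] -> lab a b = lab c d.
Proof. by case/set2_inv => [[-> ->]|[-> ->]] //; rewrite lab_sym. Qed.

Lemma pm_invol n (u : T n) : pm (pm u) = u.
Proof. by apply/esym/lab0; rewrite lab_sym lab_pm. Qed.

Definition Im n := [set [set v; pm v] | v : T n].
Definition Fk n j := [set [set v; sf j v] | v : T n].

Lemma pm_matching n : perfect_matching (blowE n.+3) (Im n).
Proof.
split.
  apply/subsetP => e /imsetP [v _ ->]; apply: lab0_blow; exact: lab_pm.
move=> w; suff -> : [set e in Im n | w \in e] = [set [set w; pm w]] by rewrite cards1.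
apply/setP => e; rewrite !inE; apply/andP/eqP.
  case=> /imsetP [v _ ->] /set2P [->|e1] //.
  by rewrite e1 pm_invol setUC.
move=> ->; split; last by rewrite set21.
by apply/imsetP; exists w.
Qed.

Lemma edge_in n j (v : T n) : 1 <= j <= 5 -> [set v; sf j v] \in HE n.+3 :\: Im n.
Proof.
move=> hj; rewrite inE; apply/andP; split.
  apply/negP => /imsetP [w _ E]; have := lab_pair E.
  by rewrite lab_sf // lab_pm => h; move: hj; rewrite h.
by apply: lab_adj; rewrite lab_sf //; case/andP: hj.
Qed.

Lemma Fdisj n j l : 1 <= j <= 5 -> 1 <= l <= 5 -> j != l -> [disjoint Fk n j & Fk n l].
Proof.
move=> hj hl jl; rewrite -setI_eq0; apply/eqP/setP => e; rewrite !inE.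
apply/negbTE/negP => /andP [/imsetP [v _ ->] /imsetP [w _ E]].
by move: (lab_pair E); rewrite !lab_sf // => h; move: jl; rewrite h eqxx.
Qed.

Lemma in_union n l e : 1 <= l <= 5 -> e \in Fk n l ->
  e \in Fk n 1 :|: Fk n 2 :|: Fk n 3 :|: Fk n 4 :|: Fk n 5.
Proof. by case: l => [|[|[|[|[|[|l]]]]]] // _ h; rewrite !in_setU h ?orbT. Qed.

Lemma union_eq n : Fk n 1 :|: Fk n 2 :|: Fk n 3 :|: Fk n 4 :|: Fk n 5 = HE n.+3 :\: Im n.
Proof.
apply/setP => e; apply/idP/idP.
  by rewrite !in_setU => /orP [/orP [/orP [/orP [h|h]|h]|h]|h];
    case/imsetP: h => v _ ->; apply: edge_in.
rewrite in_setD => /andP [nI /HE_lab [u [v [E le]]]]; subst e.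
case: (posnP (lab u v)) => [l0|lp].
  by move: nI; rewrite (lab0 l0) => /negP; case; apply/imsetP; exists u.
have hl : 1 <= lab u v <= 5 by rewrite lp le.
have := labk hl; move: hl; move: (lab u v) => l hl [->|->]; apply: (in_union hl); apply/imsetP.
  by exists u.
by exists v => //; rewrite setUC.
Qed.


Lemma cardV n : #|T n| = n.+3 * 4.
Proof. by rewrite /V card_prod !card_ord. Qed.

Lemma F1_factor n : Ck_factor 4 (HE n.+3 :\: Im n) (Fk n 1).
Proof.
apply: (@factor_traj _ 4 _ (@s1 n) [seq (a, i0) | a <- enum 'I_n.+3]) => //.
- by move=> x /mapP [a _ ->]; pairt.
- by rewrite size_map size_enum_ord cardV.
- case=> a i; exists (a, i0); first by apply/mapP; exists a; rewrite ?mem_enum.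
  by exists (val i); [exact: ltn_ord | case: (I4cases i) => ->; pairt].
- by move=> v; apply: (@edge_in n 1).
Qed.

Lemma F2_factor n : Ck_factor 4 (HE n.+3 :\: Im n) (Fk n 2).
Proof.
apply: (@factor_traj _ 4 _ (@s2 n) [seq (a, i0) | a <- enum 'I_n.+3]) => //.
- by move=> x /mapP [a _ ->]; rewrite /= /s2 /= oSK.
- by rewrite size_map size_enum_ord cardV.
- case=> b i; case: (I4cases i) => ->.
  + exists (b, i0); first by apply/mapP; exists b; rewrite ?mem_enum.
    by exists 0.
  + exists (oP b, i0); first by apply/mapP; exists (oP b); rewrite ?mem_enum.
    by exists 3 => //; rewrite /= /s2 /= oPK.
  + exists (b, i0); first by apply/mapP; exists b; rewrite ?mem_enum.
    by exists 1.
  + exists (oP b, i0); first by apply/mapP; exists (oP b); rewrite ?mem_enum.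
    by exists 2 => //; rewrite /= /s2 /= oPK.
- by move=> v; apply: (@edge_in n 2).
Qed.


Fixpoint gg n k (j : 'I_4) t : 'I_4 :=
  match t with 0 => j | t'.+1 => tab (coden n t') k (gg n k j t') end.

Lemma iter_sk n k j t : t < n.+3 ->
  iter t (@sk n k) (ord0, j) = (inord t, gg n k j t).
Proof.
elim: t => [|t IH] ht.
  by congr pair; apply/val_inj; rewrite /= inordK.
rewrite iterS IH ?(ltnW ht) //; congr pair.
  by apply/val_inj; rewrite valS /= (inordK (ltnW ht)) (inordK ht) (ltn_eqF ht).
by rewrite /= /sig inordK //; lia.
Qed.

Lemma coden0 n t : ~~ odd n.+3 || (t < n) -> coden n t = 0.
Proof. by rewrite /coden; case: (odd n.+3) => //= h; rewrite leqNgt h. Qed.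

Lemma gg_even n k j r : 2 * r <= n.+3 -> (odd n.+3 -> 2 * r <= n) -> gg n k j (2 * r) = j.
Proof.
elim: r => [|r IH] h1 h2 //.
have -> : 2 * r.+1 = (2 * r).+2 by lia.
rewrite /= IH; [|lia|move=> o; have := h2 o; lia].
rewrite !coden0 ?tab_invol //; case: (odd n.+3) h2 => //= h2; have := h2 isT; lia.
Qed.

Lemma gg_full n k j : gg n k j n.+3 = j.
Proof.
case: (boolP (odd n.+3)) => o.
  have ev : n = 2 * n./2.
    by move: o; rewrite /= negbK => o; rewrite -{1}(odd_double_half n) (negbTE o) add0n mul2n.
  rewrite /= /coden o /= leqnn (leqnSn n) (leqW (leqnSn n)).
  have -> : n.+2 - n + 1 = 3 by lia.
  have -> : n.+1 - n + 1 = 2 by lia.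
  have -> : n - n + 1 = 1 by lia.
  by rewrite ev gg_even -?ev ?tab_block //; lia.
have ev : n.+3 = 2 * (n.+3)./2.
  by rewrite -{1}(odd_double_half n.+3) (negbTE o) add0n mul2n.
by rewrite ev gg_even -?ev // (negbTE o).
Qed.

Lemma gg_inj n k t : injective (fun j => gg n k j t).
Proof. elim: t => [|t IH] i j //= /tab_inj; exact: IH. Qed.

Lemma Fsk_factor n k : k < 3 -> Ck_factor n.+3 (HE n.+3 :\: Im n) (Fk n k.+3).
Proof.
move=> hk.
have -> : Fk n k.+3 = [set [set v; sk k v] | v : T n].
  by rewrite /Fk; case: k hk => [|[|[|]]].
apply: (@factor_traj _ n.+3 _ (@sk n k) [seq (ord0, j) | j <- enum 'I_4]) => //.
- move=> x /mapP [j _ ->].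
  rewrite -[n.+3]/(n.+2.+1) iterS iter_sk //.
  have -> : @sk n k (inord n.+2, gg n k j n.+2) = (@oS n (inord n.+2), gg n k j n.+3).
    by rewrite /sk /sig /= inordK.
  by rewrite gg_full; congr pair; apply/val_inj; rewrite valS /= inordK // eqxx.
- by rewrite size_map size_enum_ord mulnC cardV.
- case=> a i; have [g gK Kg] := injF_bij (@gg_inj n k a).
  exists (ord0, g i); first by apply/mapP; exists (g i); rewrite ?mem_enum.
  exists (val a); first exact: ltn_ord.
  by rewrite iter_sk ?ltn_ord // inord_val Kg.
- move=> v; have := (@edge_in n k.+3 v); rewrite /sf.
  by case: k hk => [|[|[|]]] // _ h; apply: h.
Qed.


Theorem mainTheorem6 (m : nat) (hm : 3 <= m) :
  exists I : {set {set V m}},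
    perfect_matching (blowE m) I /\
    exists F1 F2 F3 F4 F5 : {set {set V m}},
      [/\ Ck_factor 4 (HE m :\: I) F1,
          Ck_factor 4 (HE m :\: I) F2,
          Ck_factor m (HE m :\: I) F3,
          Ck_factor m (HE m :\: I) F4 &
          Ck_factor m (HE m :\: I) F5] /\
      (* the five factors partition the edge set of H - I *)
      F1 :|: F2 :|: F3 :|: F4 :|: F5 = HE m :\: I /\
      [disjoint F1 & F2] /\ [disjoint F1 & F3] /\ [disjoint F1 & F4] /\
      [disjoint F1 & F5] /\ [disjoint F2 & F3] /\ [disjoint F2 & F4] /\
      [disjoint F2 & F5] /\ [disjoint F3 & F4] /\ [disjoint F3 & F5] /\
      [disjoint F4 & F5].
Proof.
case: m hm => [|[|[|n]]] // _.
exists (Im n); split; first exact: pm_matching.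
exists (Fk n 1), (Fk n 2), (Fk n 3), (Fk n 4), (Fk n 5).
split; first split.
- exact: F1_factor.
- exact: F2_factor.
- exact: (@Fsk_factor n 0).
- exact: (@Fsk_factor n 1).
- exact: (@Fsk_factor n 2).
split; first exact: union_eq.
by do !split; apply: Fdisj.
Qed.
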